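(* For every integer $L\geq 0$, \[ \sum_{j=-\infty}^{\infty} (-1)^j q^{j^2} \left(\frac{j+1}{3}\right) {2L \brack L+j}_{q^2} = \frac{(q^3;q^6)_L}{(q;q^2)_L}. \]
   Context: For a variable $a$ and integer $n\ge 0$, $(a;q)_n=(1-a)(1-aq)\cdots(1-aq^{n-1})$ (with $(a;q)_0=1$). The $q$-binomial coefficient is ${A \brack B}_q=\frac{(q;q)_A}{(q;q)_B(q;q)_{A-B}}$ if $0\le B\le A$ are integers, and $0$ otherwise; ${A\brack B}_{q^2}$ is the same with $q$ replaced by $q^2$. $\left(\frac{j}{3}\right)$ is the Legendre symbol modulo 3: it equals $1$ if $j\equiv 1 \pmod 3$, $-1$ if $j\equiv -1\pmod 3$, and $0$ if $3\mid j$. *)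

(* Defs.v *)
From HB Require Import structures.
From mathcomp Require Import all_boot all_order all_algebra.
From mathcomp Require Export fraction.
Set Implicit Arguments. Unset Strict Implicit. Unset Printing Implicit Defensive.
Import Order.TTheory GRing.Theory Num.Theory.
Local Open Scope ring_scope.

Definition qpoch (F : fieldType) (a q : F) (n : nat) : F :=
  \prod_(i < n) (1 - a * q ^+ i).

Definition qbinom (F : fieldType) (q : F) (A B : int) : F :=
  if (0 <= B) && (B <= A) then
    qpoch q q `|A|%N / (qpoch q q `|B|%N * qpoch q q `|A - B|%N)
  else 0.

Definition legendre3 (j : int) : int :=
  if (j %% 3)%Z == 1 then 1 else if (j %% 3)%Z == 2 then -1 else 0.

Definition QF : fieldType := {fraction {poly rat}}.
Definition qX : QF := @tofrac _ ('X : {poly rat}).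

(* Main.v *)
Require Import Defs.
From mathcomp Require Import all_boot all_order all_algebra.
From mathcomp Require Import zify ring.
Import GRing.Theory Num.Theory.
Local Open Scope ring_scope.

Lemma qX_neq0 : qX != 0.
Proof. by rewrite /qX tofrac_eq0 polyX_eq0. Qed.

Lemma one_sub_qX_neq0 k : (0 < k)%N -> 1 - qX ^+ k != 0.
Proof.
move=> k0; rewrite subr_eq0 /qX -tofracXn -tofrac1 tofrac_eq.
apply/negP => /eqP H.
have := congr1 (fun p : {poly rat} => size p) H; rewrite /= size_polyXn size_poly1; lia.
Qed.

Lemma sign_abs (F : fieldType) (j : int) : (-1) ^+ `|j|%N = (-1) ^ j :> F.
Proof.
case: j => n; first by rewrite exprnP.
rewrite NegzE -exprz_inv invrN1 /= exprnP. by [].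
Qed.

Lemma sq_abs (F : fieldType) (q : F) (j : int) : q ^+ (`|j| ^ 2)%N = q ^ (j * j).
Proof.
rewrite exprnP; congr (_ ^ _).
have [h|h] := (lerP 0 j).
 rewrite -{1}(gez0_abs h). 
 nia.
 nia.
Qed.

Set Implicit Arguments. Unset Strict Implicit.
Section S3.


Variable F : fieldType.
Variable Q : F.
Hypothesis hQ : forall k, (0 < k)%N -> 1 - Q ^+ k != 0.
Local Notation P := (qpoch Q Q).

Lemma PS n : P n.+1 = P n * (1 - Q ^+ n.+1).
Proof. by rewrite /qpoch big_ord_recr /= exprS. Qed.

Lemma P0 : P 0 = 1.
Proof. by rewrite /qpoch big_ord0. Qed.

Lemma P_neq0 n : P n != 0.
Proof.
elim: n => [|n IH]; first by rewrite P0 oner_neq0.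
by rewrite PS mulf_neq0 // hQ.
Qed.

Lemma qb_nat n k : (k <= n)%N ->
  qbinom Q n%:Z k%:Z = P n / (P k * P (n - k)).
Proof.
move=> kn; rewrite /qbinom.
have -> : (0 <= k%:Z) && (k%:Z <= n%:Z) by apply/andP; split; lia.
by rewrite subzn.
Qed.

Lemma qb_neg n m : m < 0 -> qbinom Q n m = 0.
Proof.
move=> h; rewrite /qbinom.
by have -> : (0 <= m) && (m <= n) = false by apply/negbTE/negP => /andP [? ?]; lia.
Qed.

Lemma qb_big n m : n < m -> qbinom Q n m = 0.
Proof.
move=> h; rewrite /qbinom.
by have -> : (0 <= m) && (m <= n) = false by apply/negbTE/negP => /andP [? ?]; lia.
Qed.

Lemma qb_sym (n : nat) m : qbinom Q n%:Z m = qbinom Q n%:Z (n%:Z - m).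
Proof.
rewrite /qbinom.
have -> : (0 <= n%:Z - m) && (n%:Z - m <= n%:Z) = (0 <= m) && (m <= n%:Z).
  apply/idP/idP => /andP [? ?]; apply/andP; split; lia.
case: ifP => // _.
have -> : n%:Z - (n%:Z - m) = m by lia.
by rewrite (mulrC (P `|m|)).
Qed.

Lemma pascal1 (n : nat) (m : int) :
  qbinom Q (n.+1)%:Z m = qbinom Q n%:Z (m - 1) + Q ^ m * qbinom Q n%:Z m.
Proof.
case: m => [k|k]; last by rewrite !qb_neg ?mulr0 ?addr0 //; lia.
case: k => [|k].
  rewrite [qbinom Q n _]qb_neg; last by [].
  rewrite add0r expr0z mul1r !qb_nat // !P0 !subn0 !mul1r.
  by rewrite !divff ?P_neq0.
have [kn|nk] := ltnP k n.
- have -> : (Posz k.+1 - 1) = Posz k by lia.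
  rewrite (@qb_nat n.+1 k.+1); last by lia.
  rewrite (@qb_nat n k); last by lia.
  rewrite (@qb_nat n k.+1); last by lia.
  have -> : n = (k + (n - k).-1.+1)%N by lia.
  set d := (n - k).-1.
  have -> : ((k + d.+1).+1 - k.+1 = d.+1)%N by lia.
  have -> : ((k + d.+1) - k.+1 = d)%N by lia.
  have -> : ((k + d.+1) - k = d.+1)%N by lia.
  rewrite !PS -exprnP.
  have e : Q ^+ (k + d.+1).+1 = Q ^+ k.+1 * Q ^+ d.+1 by rewrite -exprD; congr (_ ^+ _); lia.
  rewrite e.
  have := P_neq0 k; have := P_neq0 d; have := P_neq0 (k + d.+1).
  have := @hQ _ (ltn0Sn k); have := @hQ _ (ltn0Sn d).
  move=> h1 h2 h3 h4 h5.
  field.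
  by rewrite h1 h2 h4 h5.
- rewrite [qbinom Q n (Posz k.+1)]qb_big; last by lia.
  rewrite mulr0 addr0.
  have [->|kn] := eqVneq k n.
    have -> : (Posz n.+1 - 1) = Posz n by lia.
    rewrite !qb_nat // !subnn P0 !mulr1 !divff ?P_neq0 //.
  rewrite !qb_big //; lia.
Qed.

Lemma pascal2 (n : nat) (m : int) :
  qbinom Q (n.+1)%:Z m = Q ^ (n.+1%:Z - m) * qbinom Q n%:Z (m - 1) + qbinom Q n%:Z m.
Proof.
rewrite qb_sym pascal1 addrC; congr (_ * _ + _).
  rewrite qb_sym; congr (qbinom _ _ _); lia.
rewrite qb_sym; congr (qbinom _ _ _); lia.
Qed.



End S3.

Section ZS.
Variable F : fieldType.
Definition Z (K : nat) (f : int -> F) : F := \sum_(i < (2 * K).+1) f (i%:Z - K%:Z).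

Lemma Z_ext K f : Z K.+1 f = f (- (K.+1)%:Z) + Z K f + f (K.+1)%:Z.
Proof.
rewrite /Z.
have -> : (2 * K.+1).+1 = ((2 * K).+1).+2 by lia.
rewrite big_ord_recr big_ord_recl /=.
congr (f _ + _ + f _); try lia.
apply: eq_bigr => i _; congr f; rewrite /bump /=; lia.
Qed.

Lemma Z_shift K f : Z K (fun j => f (j + 1)) = Z K f - f (- K%:Z) + f (K.+1)%:Z.
Proof.
rewrite /Z big_ord_recr [in RHS]big_ord_recl /=.
rewrite addrAC; congr (_ + f _); last by lia.
have -> : f (0%N%:Z - K%:Z) = f (- K%:Z) by congr f; lia.
rewrite addrAC subrr add0r; apply: eq_bigr => i _; congr f; rewrite /bump /=; lia.
Qed.

Lemma Z_add K f g : Z K (fun j => f j + g j) = Z K f + Z K g.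
Proof. by rewrite /Z big_split. Qed.

Lemma Z_scale K c f : Z K (fun j => c * f j) = c * Z K f.
Proof. by rewrite /Z mulr_sumr. Qed.

Lemma Z_eq K f g : (forall j, f j = g j) -> Z K f = Z K g.
Proof. by move=> h; apply: eq_bigr => i _; rewrite h. Qed.

Lemma Z_shiftN K f : Z K (fun j => f (j - 1)) = Z K f + f (- (K.+1)%:Z) - f K%:Z.
Proof.
have e : Z K f = Z K (fun j => (fun j => f (j - 1)) (j + 1)).
  by apply: Z_eq => j /=; rewrite addrK.
rewrite e (Z_shift K (fun j => f (j - 1))) /=.
have -> : f (- K%:Z - 1) = f (- (K.+1)%:Z) by congr f; lia.
have -> : f (K.+1%:Z - 1) = f K%:Z by congr f; lia.
ring.
Qed.
End ZS.

Lemma leg_mod y : legendre3 y = legendre3 (y %% 3)%Z.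
Proof. by rewrite /legendre3 modz_mod. Qed.

Lemma leg_sum y : legendre3 (y - 1) + legendre3 y + legendre3 (y + 1) = 0.
Proof.
rewrite (leg_mod (y - 1)) (leg_mod (y + 1)) (leg_mod y).
rewrite -(modzDml y (-1)) -(modzDml y 1).
have h0 : 0 <= (y %% 3)%Z by apply: modz_ge0.
have h3 : (y %% 3)%Z < 3 by apply: ltz_pmod.
move: (y %% 3)%Z h0 h3 => r h0 h3.
have : [|| r == 0, r == 1 | r == 2] by lia.
by case/or3P => /eqP ->.
Qed.

Unset Implicit Arguments. Set Strict Implicit.
Section Main.
Variable F : fieldType.
Variable q : F.
Hypothesis q0 : q != 0.
Hypothesis hq : forall k, (0 < k)%N -> 1 - q ^+ k != 0.

Let Q := q ^+ 2.
Lemma hQ k : (0 < k)%N -> 1 - Q ^+ k != 0.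
Proof. by move=> k0; rewrite /Q -exprM hq // muln_gt0. Qed.

Lemma QE z : Q ^ z = q ^ (2 * z).
Proof. by rewrite /Q exprnP exprz_exp. Qed.

Definition chi (x : int) : F := (legendre3 x)%:~R.
Definition w (r j : int) : F := (-1) ^ j * q ^ (j * j) * chi (j + r).
Definition B (n : nat) (m : int) : F := qbinom Q n%:Z m.
Definition E K n s r := Z K (fun j => w r j * B n (s + j)).

Lemma m1_neq0 : (-1 : F) != 0.
Proof. by rewrite oppr_eq0 oner_neq0. Qed.

Lemma keyO L r j : w r (j + 1) * Q ^ (L%:Z - j) = - q ^+ (2 * L).+1 * w (r + 1) j.
Proof.
rewrite /w QE exprnP (expfzDr _ _ m1_neq0) expr1z.
have -> : chi (j + 1 + r) = chi (j + (r + 1)) by congr chi; lia.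
have e : q ^ ((j + 1) * (j + 1)) * q ^ (2 * (L%:Z - j)) = q ^ ((2 * L).+1)%N%:Z * q ^ (j * j).
  by rewrite -!expfzDr //; congr (_ ^ _); lia.
set a := q ^ ((j + 1) * (j + 1)) in e *.
set b := q ^ (2 * (L%:Z - j)) in e *.
set c := q ^ ((2 * L).+1)%N%:Z in e *.
transitivity (- ((-1) ^ j * (a * b) * chi (j + (r + 1)))); first by ring.
rewrite e; ring.
Qed.

Lemma keyE L r j : w r (j - 1) * Q ^ (L%:Z + j) = - q ^+ (2 * L).+1 * w (r - 1) j.
Proof.
rewrite /w QE exprnP (expfzDr _ _ m1_neq0).
have -> : (-1 : F) ^ (- 1) = -1 by rewrite -exprz_inv invrN1 expr1z.
have -> : chi (j - 1 + r) = chi (j + (r - 1)) by congr chi; lia.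
have e : q ^ ((j - 1) * (j - 1)) * q ^ (2 * (L%:Z + j)) = q ^ ((2 * L).+1)%N%:Z * q ^ (j * j).
  by rewrite -!expfzDr //; congr (_ ^ _); lia.
set a := q ^ ((j - 1) * (j - 1)) in e *.
set b := q ^ (2 * (L%:Z + j)) in e *.
set c := q ^ ((2 * L).+1)%N%:Z in e *.
transitivity (- ((-1) ^ j * (a * b) * chi (j + (r - 1)))); first by ring.
rewrite e; ring.
Qed.


Lemma stepO L K r : (L < K)%N ->
  E K (2 * L).+1 L r = E K (2 * L) L r - q ^+ (2 * L).+1 * E K (2 * L) L (r + 1).
Proof.
move=> LK; rewrite /E.
pose h j := w r (j + 1) * Q ^ (L%:Z - j) * B (2 * L) (L%:Z + j).
transitivity (Z K (fun j => h (j - 1)) + Z K (fun j => w r j * B (2 * L) (L%:Z + j))).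
  rewrite -Z_add; apply: Z_eq => j.
  rewrite /h /B pascal2; last exact: hQ.
  rewrite subrK mulrDr mulrA.
  congr (_ * Q ^ _ * qbinom _ _ _ + _); lia.
rewrite Z_shiftN addrC.
have -> : h (- K.+1%:Z) = 0.
  by rewrite /h /B qb_neg ?mulr0 //; lia.
have -> : h K%:Z = 0.
  by rewrite /h /B qb_big ?mulr0 //; lia.
rewrite addr0 subr0; congr (_ + _); rewrite -mulNr -Z_scale.
apply: Z_eq => j; rewrite /h keyO; ring.
Qed.

Lemma stepE L K r : (L < K)%N ->
  E K (2 * L).+2 L.+1 r = E K (2 * L).+1 L r - q ^+ (2 * L).+1 * E K (2 * L).+1 L (r - 1).
Proof.
move=> LK; rewrite /E.
pose g j := w r (j - 1) * Q ^ (L%:Z + j) * B (2 * L).+1 (L%:Z + j).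
transitivity (Z K (fun j => w r j * B (2 * L).+1 (L%:Z + j)) + Z K (fun j => g (j + 1))).
  rewrite -Z_add; apply: Z_eq => j.
  rewrite /g /B pascal1; last exact: hQ.
  rewrite addrK mulrDr mulrA.
  congr (_ * qbinom _ _ _ + _ * Q ^ _ * qbinom _ _ _); lia.
rewrite Z_shift.
have -> : g (- K%:Z) = 0.
  by rewrite /g /B qb_neg ?mulr0 //; lia.
have -> : g K.+1%:Z = 0.
  by rewrite /g /B qb_big ?mulr0 //; lia.
rewrite addr0 subr0; congr (_ + _); rewrite -mulNr -Z_scale.
apply: Z_eq => j; rewrite /g keyE; ring.
Qed.


Lemma chi_sum y : chi (y + 1) + chi (y - 1) = - chi y.
Proof.
have := leg_sum y; move/(congr1 (fun z : int => z%:~R : F)).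
rewrite !rmorphD /= rmorph0 -/(chi _) -/(chi _) -/(chi _) => h.
apply: (addrI (chi y)); rewrite addrN -h; ring.
Qed.

Lemma E_sum K n s r : E K n s (r + 1) + E K n s (r - 1) = - E K n s r.
Proof.
rewrite -[- E K n s r]mulN1r /E -Z_add -Z_scale; apply: Z_eq => j; rewrite /w.
have := chi_sum (j + r); rewrite !addrA => h.
transitivity ((-1) ^ j * q ^ (j * j) * (chi (j + r + 1) + chi (j + r - 1)) * B n (s + j)).
  ring.
rewrite h; ring.
Qed.

Lemma step L K r : (L < K)%N ->
  E K (2 * L).+2 L.+1 r = (1 + q ^+ (2 * L).+1 + q ^+ (2 * L).+1 ^+ 2) * E K (2 * L) L r.
Proof.
move=> LK; rewrite stepE // !stepO // subrK.
have := E_sum K (2 * L) L r.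
set a := E K (2 * L) L (r + 1).
set b := E K (2 * L) L (r - 1).
set c := E K (2 * L) L r.
move=> h; have ha : a = - c - b by rewrite -h; ring.
rewrite ha; ring.
Qed.

Lemma window L r : E L.+1 (2 * L) L r = E L (2 * L) L r.
Proof.
rewrite /E Z_ext /B qb_neg; last by lia.
rewrite qb_big; last by lia.
by rewrite !mulr0 add0r addr0.
Qed.

Lemma qpochS (a b : F) n : qpoch a b n.+1 = qpoch a b n * (1 - a * b ^+ n).
Proof. by rewrite /qpoch big_ord_recr. Qed.

Lemma qpoch_neq0 L : qpoch q (q ^+ 2) L != 0.
Proof.
elim: L => [|L IH]; first by rewrite /qpoch big_ord0 oner_neq0.
rewrite qpochS mulf_neq0 // -exprM -exprS hq //.
Qed.

Lemma main_gen L : E L (2 * L) L 1 = qpoch (q ^+ 3) (q ^+ 6) L / qpoch q (q ^+ 2) L.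
Proof.
elim: L => [|L IH].
  rewrite /E /Z big_ord1 /= /qpoch !big_ord0 divr1 /w /B subrr add0r expr0z mul1r.
  rewrite expr0z mul1r (@qb_nat _ _ 0 0) // /qpoch !big_ord0 mulr1 divr1 mulr1 /chi.
  by [].
have -> : (2 * L.+1 = (2 * L).+2)%N by lia.
rewrite step // window IH !qpochS.
have -> : q ^+ 3 * (q ^+ 6) ^+ L = (q ^+ (2 * L).+1) ^+ 3.
  by rewrite -!exprM -exprD; congr (_ ^+ _); lia.
have -> : q * (q ^+ 2) ^+ L = q ^+ (2 * L).+1 by rewrite -exprM -exprS.
have h1 := hq _ (ltn0Sn (2 * L)).
have h2 := qpoch_neq0 L.
set u := q ^+ (2 * L).+1 in h1 *.
field.
by rewrite h1 h2.
Qed.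

End Main.

Theorem theorem2p4 (L : nat) :
  \sum_(i < (2 * L).+1)
     (let j : int := (i%:Z - L%:Z)%R in
      (-1) ^+ `|j|%N * qX ^+ (`|j| ^ 2)%N * (legendre3 (j + 1))%:~R
      * qbinom (qX ^+ 2) (2 * L)%N%:Z (L%:Z + j))
  = qpoch (qX ^+ 3) (qX ^+ 6) L / qpoch qX (qX ^+ 2) L.
Proof.
rewrite -(main_gen _ _ qX_neq0 one_sub_qX_neq0 L) /E /Z.
apply: eq_bigr => i _ /=.
by rewrite /w /B /chi sign_abs sq_abs.
Qed.
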